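(* Let $\mathsf V$ be a quantale, $X=(X,a)$ a $\mathsf V$-category, $s=(x_n)_{n\in\mathbb N}$ a sequence in $X$ and $x\in X$. Then $$\bigvee_{N\in\mathbb N}\bigwedge_{n\ge N}a(x_n,x)\ \ge\ \mathrm{Cauchy}(s)\otimes\bigwedge_{N\in\mathbb N}\bigvee_{n\ge N}a(x_n,x).$$
   Context: A quantale $(\mathsf V,\otimes,k)$ is a complete anti-symmetric lattice with an associative, commutative operation $\otimes$ with neutral element $k$ distributing over arbitrary suprema. A $\mathsf V$-category $(X,a)$ is a set with $a:X\times X\to\mathsf V$ such that $k\le a(x,x)$ and $a(x,y)\otimes a(y,z)\le a(x,z)$. For a sequence $s=(x_n)$, $\mathrm{Cauchy}(s)=\bigvee_{N}\bigwedge_{n,m\ge N}a(x_n,x_m)$. *)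

(* Defs.v *)
From Stdlib Require Import Arith.

Record Quantale := {
  qcar :> Type;
  qle : qcar -> qcar -> Prop;
  qle_refl : forall x, qle x x;
  qle_trans : forall x y z, qle x y -> qle y z -> qle x z;
  qle_antisym : forall x y, qle x y -> qle y x -> x = y;
  qsup : (qcar -> Prop) -> qcar;
  qsup_ub : forall (A : qcar -> Prop) x, A x -> qle x (qsup A);
  qsup_least : forall (A : qcar -> Prop) u,
      (forall x, A x -> qle x u) -> qle (qsup A) u;
  qten : qcar -> qcar -> qcar;
  qk : qcar;
  qten_assoc : forall x y z, qten x (qten y z) = qten (qten x y) z;
  qten_comm : forall x y, qten x y = qten y x;
  qten_k : forall x, qten x qk = x;
  qten_sup : forall x (A : qcar -> Prop),
      qten x (qsup A) = qsup (fun z => exists y, A y /\ z = qten x y)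
}.

Arguments qle {q}.
Arguments qsup {q}.
Arguments qten {q}.
Arguments qk {q}.

Definition qinf {V : Quantale} (A : V -> Prop) : V :=
  qsup (fun l => forall x, A x -> qle l x).

Definition bigsup {V : Quantale} {I : Type} (P : I -> Prop) (f : I -> V) : V :=
  qsup (fun v => exists i, P i /\ v = f i).
Definition biginf {V : Quantale} {I : Type} (P : I -> Prop) (f : I -> V) : V :=
  qinf (fun v => exists i, P i /\ v = f i).

Definition is_Vcat {V : Quantale} {X : Type} (a : X -> X -> V) : Prop :=
  (forall x, qle qk (a x x)) /\
  (forall x y z, qle (qten (a x y) (a y z)) (a x z)).

Definition Cauchy {V : Quantale} {X : Type} (a : X -> X -> V) (s : nat -> X) : V :=
  bigsup (fun _ : nat => True) (fun N =>
    biginf (fun nm : nat * nat => N <= fst nm /\ N <= snd nm)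
           (fun nm => a (s (fst nm)) (s (snd nm)))).

(* Main.v *)
Require Import Defs.
From Stdlib Require Import Arith.

Section H.
Variable V : Quantale.

Lemma ten_sup_le (t : V) (A : V -> Prop) (u : V) :
  (forall y, A y -> qle (qten t y) u) -> qle (qten t (qsup A)) u.
Proof.
  intros H. rewrite qten_sup. apply qsup_least.
  intros z [y [Hy ->]]. now apply H.
Qed.

Lemma ten_mono (t y z : V) : qle y z -> qle (qten t y) (qten t z).
Proof.
  intros Hyz.
  assert (E : z = qsup (fun w => w = y \/ w = z)).
  { apply qle_antisym.
    - apply qsup_ub. now right.
    - apply qsup_least. intros w [-> | ->]; [exact Hyz | apply qle_refl]. }
  rewrite E, qten_sup. apply qsup_ub. exists y. split; [now left | reflexivity].
Qed.

Lemma qinf_lb (A : V -> Prop) x : A x -> qle (qinf A) x.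
Proof. intros Hx. unfold qinf. apply qsup_least. intros l Hl. now apply Hl. Qed.

Lemma qinf_glb (A : V -> Prop) l : (forall x, A x -> qle l x) -> qle l (qinf A).
Proof. intros H. unfold qinf. now apply qsup_ub. Qed.

End H.

Theorem lemma3p11 (V : Quantale) (X : Type) (a : X -> X -> V)
  (Ha : is_Vcat a) (s : nat -> X) (x : X) :
  qle (qten (Cauchy a s)
            (biginf (fun _ : nat => True) (fun N =>
               bigsup (fun n : nat => N <= n) (fun n => a (s n) x))))
      (bigsup (fun _ : nat => True) (fun N =>
         biginf (fun n : nat => N <= n) (fun n => a (s n) x))).
Proof.
  destruct Ha as [_ Htr].
  set (J := biginf _ _).
  rewrite qten_comm. unfold Cauchy, bigsup at 1.
  apply ten_sup_le. intros c [N [_ ->]].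
  eapply qle_trans; [| apply qsup_ub; exists N; split; [exact Logic.I|reflexivity]].
  unfold biginf at 2. apply qinf_glb. intros v [m [Hm ->]].
  rewrite qten_comm.
  eapply qle_trans.
  { apply ten_mono. unfold J, biginf. apply qinf_lb. exists N. split; [exact Logic.I|reflexivity]. }
  unfold bigsup. apply ten_sup_le. intros w [n [Hn ->]].
  eapply qle_trans; [| apply (Htr (s m) (s n) x)].
  rewrite (qten_comm _ _ (a (s n) x)), (qten_comm _ (a (s m) (s n))).
  apply ten_mono.
  unfold biginf. apply qinf_lb. exists (m, n). simpl. split; [split; assumption | reflexivity].
Qed.
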